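(* Let $\mu,\nu\in\mathfrak h^*_{\mathbb R}$ be small. If $\mu-\nu\in Q^\vee$, then $\mu=\nu$.
   Context: $\mathfrak h$ is a Cartan subalgebra of a complex semisimple Lie algebra with root system $\Delta\subset\mathfrak h^*$, invariant bilinear form $(\cdot,\cdot)$ normalized by $(\alpha,\alpha)=2$ for short roots, coroots $\alpha^\vee=2\alpha/(\alpha,\alpha)$ regarded in $\mathfrak h^*_{\mathbb R}$ via the form, and $Q^\vee$ the coroot lattice. A weight $\nu\in\mathfrak h^*_{\mathbb R}$ is called small if $(\nu,\alpha)<1$ for every $\alpha\in\Delta$. *)

(* Defs.v *)
From HB Require Import structures.
From mathcomp Require Import all_boot all_order all_algebra.
From mathcomp Require Import reals.
Set Implicit Arguments. Unset Strict Implicit. Unset Printing Implicit Defensive.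
Import Order.TTheory GRing.Theory Num.Theory.
Local Open Scope ring_scope.

(* h^*_R is modelled as R^n = 'rV[R]_n, with the invariant form transported to
   the standard dot product (any real inner product space of dimension n is
   isometric to this one). *)
Definition dot (R : realType) (n : nat) (u v : 'rV[R]_n) : R := (u *m v^T) 0 0.

(* Reduced crystallographic root system (= root system of a complex semisimple
   Lie algebra) spanning R^n. *)
Definition is_root_system (R : realType) (n : nat) (D : seq 'rV[R]_n) : Prop :=
  [/\ 0 \notin D,
      (<<D>> = fullv)%VS,
      (forall a b, a \in D -> b \in D ->
          b - ((2 * dot b a) / dot a a) *: a \in D),
      (forall a b, a \in D -> b \in D ->
          (2 * dot b a) / dot a a \is a Num.int)
    & (forall a (c : R), a \in D -> c *: a \in D -> c = 1 \/ c = -1)].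

(* Normalization (a,a) = 2 for the short roots (of every simple component):
   no root is shorter than 2, and every root is non-orthogonal to (hence in
   the same simple component as) some root of squared length 2. *)
Definition short_roots_normalized (R : realType) (n : nat) (D : seq 'rV[R]_n)
  : Prop :=
  (forall a, a \in D -> 2 <= dot a a) /\
  (forall a, a \in D -> exists2 b, b \in D & dot b b = 2 /\ dot a b != 0).

Definition coroot (R : realType) (n : nat) (a : 'rV[R]_n) : 'rV[R]_n :=
  (2 / dot a a) *: a.

Definition in_coroot_lattice (R : realType) (n : nat) (D : seq 'rV[R]_n)
  (x : 'rV[R]_n) : Prop :=
  exists c : 'I_(size D) -> int,
    x = \sum_(i < size D) (coroot (tnth (in_tuple D) i)) *~ c i.

Definition small (R : realType) (n : nat) (D : seq 'rV[R]_n) (v : 'rV[R]_n)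
  : Prop := forall a, a \in D -> dot v a < 1.

(* Main.v *)
Require Import Defs.
From HB Require Import structures.
From mathcomp Require Import all_boot all_order all_algebra.
From mathcomp Require Import reals.
From mathcomp Require Import ring lra.
Import Order.TTheory GRing.Theory Num.Theory.
Local Open Scope ring_scope.
Set Implicit Arguments. Unset Strict Implicit.

Lemma dotE (R : realType) n (u v : 'rV[R]_n) : dot u v = \sum_j u 0 j * v 0 j.
Proof. by rewrite /dot !mxE; apply: eq_bigr => j _; rewrite mxE. Qed.

Lemma dotDl (R : realType) n (u v w : 'rV[R]_n) : dot (u + v) w = dot u w + dot v w.
Proof. by rewrite !dotE -big_split; apply: eq_bigr => j _; rewrite mxE mulrDl. Qed.

Lemma dotZl (R : realType) n (a : R) (u w : 'rV[R]_n) : dot (a *: u) w = a * dot u w.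
Proof. by rewrite !dotE mulr_sumr; apply: eq_bigr => j _; rewrite mxE mulrA. Qed.

Lemma dotC (R : realType) n (u v : 'rV[R]_n) : dot u v = dot v u.
Proof. by rewrite !dotE; apply: eq_bigr => j _; rewrite mulrC. Qed.

Lemma dot0l (R : realType) n (w : 'rV[R]_n) : dot 0 w = 0.
Proof. by rewrite dotE big1 // => j _; rewrite mxE mul0r. Qed.

Lemma dotNl (R : realType) n (u w : 'rV[R]_n) : dot (- u) w = - dot u w.
Proof. by rewrite -scaleN1r dotZl mulN1r. Qed.

Lemma dotBl (R : realType) n (u v w : 'rV[R]_n) : dot (u - v) w = dot u w - dot v w.
Proof. by rewrite dotDl dotNl. Qed.

Lemma dot_suml (R : realType) n (I : Type) (s : seq I) (F : I -> 'rV[R]_n) w :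
  dot (\sum_(i <- s) F i) w = \sum_(i <- s) dot (F i) w.
Proof. by elim: s => [|i s IH]; rewrite ?big_nil ?dot0l // !big_cons dotDl IH. Qed.

Lemma dot_ge0 (R : realType) n (u : 'rV[R]_n) : 0 <= dot u u.
Proof. by rewrite dotE sumr_ge0 // => j _; rewrite -expr2 sqr_ge0. Qed.

Lemma dot_eq0 (R : realType) n (u : 'rV[R]_n) : dot u u = 0 -> u = 0.
Proof.
rewrite dotE => H; apply/rowP => j; rewrite mxE.
have := psumr_eq0P (fun j _ => (sqr_ge0 (u 0 j))) H (isT : true).
move=> H2; apply/eqP; rewrite -sqrf_eq0; exact/eqP.
Qed.

Lemma dot2 (R : realType) n (x y : R) (a b : 'rV[R]_n) :
  dot (x *: a + y *: b) (x *: a + y *: b) =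
  x ^+ 2 * dot a a + 2 * x * y * dot a b + y ^+ 2 * dot b b.
Proof.
rewrite dotDl !dotZl (dotC a) (dotC b) !dotDl !dotZl (dotC b a); ring.
Qed.

Lemma rem_memP (T : eqType) (x y : T) s : x != y -> x \in s -> x \in rem y s.
Proof. exact: rem_mem. Qed.
From mathcomp Require Import zify.

Lemma int_le (R : realType) (x : R) : x \is a Num.int -> x < 0 -> x != -1 -> x <= -2.
Proof.
move=> /intrP [m ->]; rewrite ltrz0 => m0 m1.
have m1' : m != -1 by apply: contraNneq m1 => ->.
have : m <= -2 by lia.
by rewrite -(ler_int R) .
Qed.

Definition csum (R : realType) n (L : seq 'rV[R]_n) := \sum_(a <- L) coroot a.

Lemma neg_root (R : realType) n (D : seq 'rV[R]_n) (hD : is_root_system D)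
  (hpos : forall a, a \in D -> 0 < dot a a) a : a \in D -> - a \in D.
Proof.
move=> aD; case: hD => _ _ H3 _ _; have := H3 a a aD aD.
rewrite mulfK ?lt0r_neq0 ?hpos // scaler_nat mulr2n opprD addrA subrr add0r //.
Qed.

Lemma coroot_neg (R : realType) n (a : 'rV[R]_n) : coroot (- a) = - coroot a.
Proof. by rewrite /coroot dotNl dotC dotNl opprK scalerN. Qed.

Lemma refl_norm (R : realType) n (a b : 'rV[R]_n) : 0 < dot b b ->
  dot (a - (2 * dot a b / dot b b) *: b) (a - (2 * dot a b / dot b b) *: b) = dot a a.
Proof.
move=> pb.
have -> : a - (2 * dot a b / dot b b) *: b = 1 *: a + (- (2 * dot a b / dot b b)) *: b.
  by rewrite scale1r scaleNr.
rewrite dot2; field; exact: lt0r_neq0.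
Qed.

Lemma coroot_refl (R : realType) n (a b : 'rV[R]_n) : 0 < dot a a -> 0 < dot b b ->
  2 * dot b a / dot a a = -1 ->
  coroot (a - (2 * dot a b / dot b b) *: b) = coroot a + coroot b.
Proof.
move=> pa pb H.
have pne : dot a a != 0 by exact: lt0r_neq0.
have qne : dot b b != 0 by exact: lt0r_neq0.
have Hd : 2 * dot a b = - dot a a by rewrite dotC -[LHS](divfK pne) H mulN1r.
rewrite /coroot refl_norm // scalerBr scalerA.
have -> : 2 / dot a a * (2 * dot a b / dot b b) = - (2 / dot b b).
  by rewrite Hd; field; apply/andP.
by rewrite scaleNr opprK.
Qed.

Lemma dot_coroot_self (R : realType) n (a : 'rV[R]_n) : 0 < dot a a -> dot (coroot a) a = 2.
Proof. by move=> pa; rewrite /coroot dotZl divfK // lt0r_neq0. Qed.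

Lemma descent (R : realType) n (D : seq 'rV[R]_n) (hD : is_root_system D)
  (hpos : forall a, a \in D -> 0 < dot a a) :
  forall L, all (mem D) L -> exists2 L', all (mem D) L' &
    csum L' = csum L /\ forall a b, a \in L' -> b \in L' -> 0 <= dot a b.
Proof.
move=> L; have [k] := ubnP (size L); elim: k L => // k IH L HsL HL.
case: (boolP (has (fun a => has (fun b => dot a b < 0) L) L));
  last first.
  move=> Hn; exists L => //; split => // a b aL bL.
  by move/hasPn: Hn => /(_ a aL)/hasPn/(_ b bL); rewrite -leNgt.
move=> /hasP[a aL /hasP[b bL dab]].
have aD : a \in D := allP HL a aL.
have bD : b \in D := allP HL b bL.
have pa := hpos a aD; have pb := hpos b bD.
have pne : dot a a != 0 by exact: lt0r_neq0.
have qne : dot b b != 0 by exact: lt0r_neq0.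
have ab : a != b by apply: contraTneq dab => ->; rewrite -leNgt ltW.
have aL' : a \in rem b L := rem_mem ab aL.
set L0 := rem a (rem b L).
have HsL0 : (size L0).+2 = size L.
  rewrite /L0 size_rem // size_rem //.
  have h1 : (0 < size (rem b L))%N by case: (rem b L) aL'.
  rewrite size_rem // in h1. by case: (size L) h1 => // [[|m]].
have HL0 : all (mem D) L0.
  apply/allP => x /(mem_subseq (rem_subseq _ _)) /(mem_subseq (rem_subseq _ _)).
  exact: allP HL x.
have Hsum : csum L = coroot a + coroot b + csum L0.
  rewrite /csum (big_rem b bL) (big_rem a aL') /=.
  by rewrite addrA (addrC (coroot b)).
case: hD => H0 Hspan Hrefl Hint Hred.
have k1i := Hint a b aD bD.
have k2i := Hint b a bD aD.
have dba : dot b a < 0 by rewrite dotC.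
have k1n : 2 * dot b a / dot a a < 0.
  by rewrite pmulr_llt0 ?invr_gt0 // pmulr_rlt0.
have k2n : 2 * dot a b / dot b b < 0.
  by rewrite pmulr_llt0 ?invr_gt0 // pmulr_rlt0.
case E1: (2 * dot b a / dot a a == -1).
  set r := a - (2 * dot a b / dot b b) *: b.
  have rD : r \in D := Hrefl b a bD aD.
  have s1 : (size (r :: L0) < k)%N by rewrite /= -HsL0 in HsL *.
  have s2 : all (mem D) (r :: L0) by apply/andP; split.
  have [L' HL' [HS HP]] := IH _ s1 s2.
  have Hr : coroot r = coroot a + coroot b by apply: coroot_refl => //; exact/eqP.
  exists L' => //; split => //; rewrite HS /csum big_cons -/(csum L0) Hr; exact: esym Hsum.
case E2: (2 * dot a b / dot b b == -1).
  set r := b - (2 * dot b a / dot a a) *: a.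
  have rD : r \in D := Hrefl a b aD bD.
  have s1 : (size (r :: L0) < k)%N by rewrite /= -HsL0 in HsL *.
  have s2 : all (mem D) (r :: L0) by apply/andP; split.
  have [L' HL' [HS HP]] := IH _ s1 s2.
  have Hr : coroot r = coroot b + coroot a by apply: coroot_refl => //; exact/eqP.
  exists L' => //; split => //; rewrite HS /csum big_cons -/(csum L0) Hr (addrC (coroot b)); exact: esym Hsum.
have k1l := int_le k1i k1n (negbT E1).
have k2l := int_le k2i k2n (negbT E2).
have w0 : coroot a + coroot b = 0.
  apply: dot_eq0; apply/eqP; rewrite eq_le dot_ge0 andbT.
  rewrite /coroot dot2.
  have -> : (2 / dot a a) ^+ 2 * dot a a + 2 * (2 / dot a a) * (2 / dot b b) * dot a b +
      (2 / dot b b) ^+ 2 * dot b b =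
      2 / dot a a * (2 + 2 * dot a b / dot b b) + 2 / dot b b * (2 + 2 * dot b a / dot a a).
    by rewrite (dotC b a); field; apply/andP.
  have h1 : 0 <= 2 / dot a a by rewrite divr_ge0 // ltW.
  have h2 : 0 <= 2 / dot b b by rewrite divr_ge0 // ltW.
  have h3 : 2 + 2 * dot a b / dot b b <= 0 by lra.
  have h4 : 2 + 2 * dot b a / dot a a <= 0 by lra.
  have := mulr_ge0_le0 h1 h3; have := mulr_ge0_le0 h2 h4; lra.
have s1 : (size L0 < k)%N by move: HsL; rewrite -HsL0 ltnS => /ltnW.
have [L' HL' [HS HP]] := IH _ s1 HL0.
exists L' => //; split; [by rewrite HS Hsum w0 add0r | exact: HP].
Qed.

Definition inL (R : realType) n (D : seq 'rV[R]_n) (x : 'rV[R]_n) :=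
  exists2 L, all (mem D) L & x = csum L.

Lemma inL0 (R : realType) n (D : seq 'rV[R]_n) : inL D 0.
Proof. by exists [::] => //; rewrite /csum big_nil. Qed.

Lemma inLD (R : realType) n (D : seq 'rV[R]_n) x y : inL D x -> inL D y -> inL D (x + y).
Proof.
move=> [L1 H1 ->] [L2 H2 ->]; exists (L1 ++ L2); first by rewrite all_cat H1.
by rewrite /csum big_cat.
Qed.

Lemma inLN (R : realType) n (D : seq 'rV[R]_n) (hD : is_root_system D)
  (hpos : forall a, a \in D -> 0 < dot a a) x : inL D x -> inL D (- x).
Proof.
move=> [L H ->]; exists (map (fun a => - a) L).
  apply/allP => y /mapP [a aL ->]; apply: neg_root => //; exact: allP H a aL.
rewrite /csum big_map -sumrN; apply: eq_bigr => a _; by rewrite coroot_neg.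
Qed.

Lemma inLzr (R : realType) n (D : seq 'rV[R]_n) (hD : is_root_system D)
  (hpos : forall a, a \in D -> 0 < dot a a) x (c : int) : inL D x -> inL D (x *~ c).
Proof.
move=> Hx.
have Hn : forall k : nat, inL D (x *+ k).
  elim=> [|k IH]; first by rewrite mulr0n; exact: inL0.
  by rewrite mulrS; apply: inLD.
case: c => k; first exact: Hn.
by rewrite NegzE mulrNz; apply: inLN => //; exact: Hn.
Qed.

Theorem mainTheorem2 (R : realType) (n : nat) (D : seq 'rV[R]_n)
  (hD : is_root_system D) (hN : short_roots_normalized D)
  (mu nu : 'rV[R]_n) :
  small D mu -> small D nu -> in_coroot_lattice D (mu - nu) -> mu = nu.
Proof.
move=> smu snu [c Hc].
have hpos : forall a, a \in D -> 0 < dot a a.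
  by move=> a aD; case: hN => H _; apply: lt_le_trans (H a aD).
have : inL D (mu - nu).
  rewrite Hc; apply: (big_ind (inL D)); first exact: inL0.
    by move=> x y; apply: inLD.
  move=> i _; apply: inLzr => //; exists [:: tnth (in_tuple D) i].
    by rewrite /= mem_tnth.
  by rewrite /csum big_seq1.
move=> [L HL HLs].
have [L' HL' [HS HP]] := descent hD hpos HL.
case: L' HL' HS HP => [|g L''] HL' HS HP.
  by apply/eqP; rewrite -subr_eq0 HLs -HS /csum big_nil.
have gL : g \in g :: L'' by rewrite mem_head.
have gD : g \in D := allP HL' g gL.
have pg := hpos g gD.
have H1 : dot (mu - nu) g >= 2.
  rewrite HLs -HS /csum dot_suml big_cons dot_coroot_self //.
  rewrite lerDl big_seq sumr_ge0 // => d dL.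
  have dL' : d \in g :: L'' by rewrite inE dL orbT.
  have dD : d \in D := allP HL' d dL'.
  rewrite /coroot dotZl; apply: mulr_ge0; last exact: (HP d g dL' gL).
  by rewrite divr_ge0 // ltW // hpos.
have h1 := smu g gD.
have h2 := snu (- g) (neg_root hD hpos gD).
rewrite dotC dotNl dotC in h2.
rewrite dotBl in H1.
move: H1 h1 h2; generalize (dot mu g) (dot nu g) => x y.
clear; move=> *; exfalso; lra.
Qed.
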